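(* Let $m\ge n\ge o\ge 0$ be integers with $m+n+o\ge 4$ such that the complete tripartite graph $K_{m,n,o}$ is connected. Let the vertices of the parts of sizes $m,n,o$ carry the indeterminates $x_1,\dots,x_m$, $y_1,\dots,y_n$, $z_1,\dots,z_o$ respectively. Then the third critical ideal $I_3=I_3(K_{m,n,o},\{X,Y,Z\})\subseteq\mathbb{Z}[x_1,\dots,x_m,y_1,\dots,y_n,z_1,\dots,z_o]$ is: - $\langle 2, x_1,\dots,x_m, y_1,\dots,y_n, z_1,\dots,z_o\rangle$ if $m,n,o\ge 2$; - $\langle x_1,\dots,x_m, y_1,\dots,y_n, z_1+2\rangle$ if $m\ge2$, $n\ge 2$, $o=1$; - $\langle x_1,\dots,x_m, y_1+z_1+2\rangle$ if $m\ge 3$, $n=1$, $o=1$; - $\langle x_1x_2+x_1+x_2,\ x_1z_1+x_1,\ x_2z_1+x_2,\ y_1+z_1+2\rangle$ if $m=2$, $n=1$, $o=1$; - $\langle x_1,\dots,x_m, y_1,\dots,y_n\rangle$ if $m\ge 3$, $n\ge 3$, $o=0$; - $\langle x_1,\dots,x_m, y_1+y_2\rangle$ if $m\ge 3$, $n=2$, $o=0$; - $\langle x_2y_2,\ x_1+x_2,\ y_1+y_2\rangle$ if $m=2$, $n=2$, $o=0$; - $\langle x_1,\dots,x_m\rangle$ if $m\ge 3$, $n=1$, $o=0$.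
   Context: For a finite graph $G$ with an indeterminate $x_u$ for each vertex $u$, the generalized Laplacian matrix $L(G,X_G)$ is the matrix indexed by $V(G)$ with $(u,u)$-entry $x_u$ and $(u,v)$-entry $-m_{uv}$ for $u\ne v$, $m_{uv}$ being the number of edges between $u$ and $v$. The third critical ideal $I_3(G,X_G)$ is the ideal of $\mathbb{Z}[X_G]$ generated by all $3\times 3$ minors of $L(G,X_G)$. $K_{m,n,o}$ is the complete tripartite graph with parts of sizes $m,n,o$ (for $o=0$ it is the complete bipartite graph $K_{m,n}$). *)

(* Defs.v *)
From HB Require Import structures.
From mathcomp Require Import all_boot all_order all_algebra.
From mathcomp Require Import mpoly.
Set Implicit Arguments. Unset Strict Implicit. Unset Printing Implicit Defensive.
Import Order.TTheory GRing.Theory Num.Theory.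
Local Open Scope ring_scope.

Definition ideal_gen (R : comPzRingType) (S : R -> Prop) : R -> Prop :=
  fun p => exists (k : nat) (c s : 'I_k -> R),
    (forall i, S (s i)) /\ p = \sum_(i < k) c i * s i.

Definition gen_laplacian (N : nat) (mult : 'I_N -> 'I_N -> nat)
  : 'M[{mpoly int[N]}]_N :=
  \matrix_(u, v) (if u == v then 'X_u else - (mult u v)%:R).

(* A k x k minor is the determinant of the submatrix with rows f(0..k-1) and
   columns g(0..k-1) for injective f, g (reordering only changes the sign). *)
Definition critical_ideal (N : nat) (mult : 'I_N -> 'I_N -> nat) (k : nat)
  : {mpoly int[N]} -> Prop :=
  ideal_gen (fun p => exists f g : 'I_k -> 'I_N,
    injective f /\ injective g /\
    p = \det (\matrix_(i, j) gen_laplacian mult (f i) (g j))).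

Definition tri_part (m n : nat) (i : nat) : nat :=
  (if i < m then 0 else if i < m + n then 1 else 2)%N.

Definition Kmno_mult (m n o : nat) (u v : 'I_(m + n + o)) : nat :=
  if tri_part m n u != tri_part m n v then 1%N else 0%N.

Arguments Kmno_mult : clear implicits.

Definition Kmno_adj (m n o : nat) : rel 'I_(m + n + o) :=
  fun u v => Kmno_mult m n o u v != 0%N.

Arguments Kmno_adj : clear implicits.

Definition graph_connected (T : finType) (e : rel T) : Prop :=
  forall u v : T, connect e u v.

(* The variable with (0-based) index k in Z[X_0..X_{N-1}] (0 if out of range). *)
Definition Xv (N : nat) (k : nat) : {mpoly int[N]} :=
  match @insub nat (fun k => (k < N)%N) 'I_N k with Some i => 'X_i | None => 0 end.

(* Naming of the variables as in the paper (1-based):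
   x_k = vertex k-1, y_k = vertex m+k-1, z_k = vertex m+n+k-1. *)
Definition xv (m n o k : nat) : {mpoly int[m + n + o]} := Xv (m + n + o) (k.-1).
Definition yv (m n o k : nat) : {mpoly int[m + n + o]} := Xv (m + n + o) (m + k.-1)%N.
Definition zv (m n o k : nat) : {mpoly int[m + n + o]} := Xv (m + n + o) (m + n + k.-1)%N.

(* Main.v *)
Require Import Defs.
From HB Require Import structures.
From mathcomp Require Import all_boot all_order all_algebra.
From mathcomp Require Import mpoly.
From mathcomp Require Import ring zify.
Set Implicit Arguments. Unset Strict Implicit. Unset Printing Implicit Defensive.
Import Order.TTheory GRing.Theory Num.Theory.
Local Open Scope ring_scope.


Section Ideal.
Variable R : comPzRingType.
Implicit Types (S T : R -> Prop) (p q : R).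

Lemma ig0 S : ideal_gen S 0.
Proof. by exists 0%N, (fun _ => 0), (fun _ => 0); split; [by case | by rewrite big_ord0]. Qed.

Lemma igS S s : S s -> ideal_gen S s.
Proof.
move=> Hs; exists 1%N, (fun _ => 1), (fun _ => s); split=> // .
by rewrite big_ord1 mul1r.
Qed.

Lemma igD S p q : ideal_gen S p -> ideal_gen S q -> ideal_gen S (p + q).
Proof.
move=> [k1 [c1 [s1 [H1 ->]]]] [k2 [c2 [s2 [H2 ->]]]].
exists (k1 + k2)%N, (fun i => match split i with inl a => c1 a | inr b => c2 b end),
  (fun i => match split i with inl a => s1 a | inr b => s2 b end).
split; first by move=> i; case: (split i).
rewrite big_split_ord /=; congr (_ + _); apply: eq_bigr => i _.
  by rewrite -[lshift _ _]/(unsplit (inl _)) unsplitK.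
by rewrite -[rshift _ _]/(unsplit (inr _)) unsplitK.
Qed.

Lemma igM S c p : ideal_gen S p -> ideal_gen S (c * p).
Proof.
move=> [k [c1 [s1 [H1 ->]]]]; exists k, (fun i => c * c1 i), s1; split=> //.
by rewrite mulr_sumr; apply: eq_bigr => i _; rewrite mulrA.
Qed.

Lemma igMr S c p : ideal_gen S p -> ideal_gen S (p * c).
Proof. by rewrite mulrC; apply: igM. Qed.

Lemma igN S p : ideal_gen S p -> ideal_gen S (- p).
Proof. by move=> H; rewrite -mulN1r; apply: igM. Qed.

Lemma igB S p q : ideal_gen S p -> ideal_gen S q -> ideal_gen S (p - q).
Proof. by move=> Hp Hq; apply: igD => //; apply: igN. Qed.

Lemma ig_eq S p q : p = q -> ideal_gen S q -> ideal_gen S p.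
Proof. by move=> ->. Qed.

Lemma ig_sub S T : (forall s, S s -> ideal_gen T s) ->
  forall p, ideal_gen S p -> ideal_gen T p.
Proof.
move=> HST p [k [c [s [Hs ->]]]].
apply: (big_ind (ideal_gen T)); [exact: ig0 | exact: igD |] => i _.
by apply: igM; apply: HST.
Qed.

End Ideal.

Lemma det2 (R : comPzRingType) (A : 'M[R]_2) :
  \det A = A 0 0 * A 1 1 - A 0 1 * A 1 0.
Proof.
rewrite (expand_det_row _ 0) !big_ord_recl big_ord0 /cofactor !det_mx11 /=.
rewrite !mxE /= /bump /= expr0 expr1.
pose F (i j : nat) := A (inord i) (inord j).
have HA : forall i j, A i j = F (val i) (val j) by move=> i j; rewrite /F !inord_val.
rewrite !HA /=. ring.
Qed.

Lemma det3 (R : comPzRingType) (A : 'M[R]_3) :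
  \det A = A 0 0 * (A 1 1 * A 2 2 - A 1 2 * A 2 1)
         - A 0 1 * (A 1 0 * A 2 2 - A 1 2 * A 2 0)
         + A 0 2 * (A 1 0 * A 2 1 - A 1 1 * A 2 0).
Proof.
rewrite (expand_det_row _ 0) !big_ord_recl big_ord0 /cofactor !det2 /=.
rewrite !mxE /= /bump /= expr0 expr1 expr2.
pose F (i j : nat) := A (inord i) (inord j).
have HA : forall i j, A i j = F (val i) (val j) by move=> i j; rewrite /F !inord_val.
rewrite !HA /=. ring.
Qed.

Lemma det_mxsub (R : comPzRingType) k (C : 'M[R]_k) (s t : 'I_k -> 'I_k) :
  \det (\matrix_(i, j) C (s i) (t j)) =
  \det (rowsub s (1%:M : 'M[R]_k)) * \det C * \det (rowsub t (1%:M : 'M[R]_k)).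
Proof.
have -> : \matrix_(i, j) C (s i) (t j) =
   rowsub s 1%:M *m (C *m (rowsub t (1%:M : 'M[R]_k))^T).
  rewrite mul_rowsub_mx mul1mx.
  have -> : C *m (rowsub t 1%:M)^T = ((rowsub t 1%:M) *m C^T)^T by rewrite trmx_mul trmxK.
  rewrite mul_rowsub_mx mul1mx.
  by apply/matrixP => i j; rewrite !mxE.
by rewrite !det_mulmx det_tr mulrA.
Qed.


Section Kern.
Variable N : nat.
Local Notation R := {mpoly int[N]}.

Lemma ig_prod (S : R -> Prop) (I : finType) (a b : I -> R) :
  (forall i, ideal_gen S (a i - b i)) ->
  ideal_gen S (\prod_i a i - \prod_i b i).
Proof.
move=> H.
apply: (big_ind2 (fun x y => ideal_gen S (x - y))).
- by rewrite subrr; apply: ig0.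
- move=> x1 x2 y1 y2 H1 H2.
  have -> : x1 * y1 - x2 * y2 = (x1 - x2) * y1 + x2 * (y1 - y2) by ring.
  by apply: igD; [apply: igMr | apply: igM].
- by move=> i _; apply: H.
Qed.

Lemma ig_exp (S : R -> Prop) (a b : R) k :
  ideal_gen S (a - b) -> ideal_gen S (a ^+ k - b ^+ k).
Proof.
move=> H; elim: k => [|k IH]; first by rewrite !expr0 subrr; apply: ig0.
have -> : a ^+ k.+1 - b ^+ k.+1 = (a - b) * a ^+ k + b * (a ^+ k - b ^+ k).
  by rewrite !exprS; ring.
by apply: igD; [apply: igMr | apply: igM].
Qed.

Lemma kern (S : R -> Prop) (s : 'I_N -> R) :
  (forall i, ideal_gen S ('X_i - s i)) ->
  forall p, ideal_gen S (p - comp_mpoly [tuple s i | i < N] p).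
Proof.
move=> Hs; elim/mpolyind => [|c m p _ _ IH].
  by rewrite raddf0 subr0; apply: ig0.
rewrite raddfD /= comp_mpolyZ.
have -> : c *: 'X_[m] + p - (c *: ('X_[m] \mPo [tuple s i | i < N]) + (p \mPo [tuple s i | i < N]))
  = c%:MP * ('X_[m] - ('X_[m] \mPo [tuple s i | i < N])) + (p - (p \mPo [tuple s i | i < N])).
  by rewrite -!mul_mpolyC; ring.
apply: igD => //; apply: igM.
rewrite comp_mpolyX mpolyXE_id; apply: ig_prod => i.
by rewrite tnth_mktuple; apply: ig_exp.
Qed.

Lemma LE (mult : 'I_N -> 'I_N -> nat) u v :
  gen_laplacian mult u v = if u == v then 'X_u else - (mult u v)%:R.
Proof. by rewrite mxE. Qed.

Lemma dir1 (mult : 'I_N -> 'I_N -> nat) (S : R -> Prop) (s : 'I_N -> R)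
  (cls : 'I_N -> 'I_3) (C : 'M[R]_3) :
  (forall i, ideal_gen S ('X_i - s i)) ->
  (forall u v, (if u == v then s u else - (mult u v)%:R) = C (cls u) (cls v)) ->
  ideal_gen S (\det C) ->
  forall p, critical_ideal mult 3 p -> ideal_gen S p.
Proof.
move=> Hs HC Hdet; apply: ig_sub => q [f [g [_ [_ ->]]]].
set M := \matrix_(i, j) _.
set sig := comp_mpoly [tuple s i | i < N].
have -> : \det M = (\det M - sig (\det M)) + sig (\det M) by rewrite subrK.
apply: igD; first by apply: kern.
rewrite /sig -det_map_mx.
have -> : map_mx sig M = \matrix_(i, j) C (cls (f i)) (cls (g j)).
  apply/matrixP => i j; rewrite !mxE -HC.
  case: eqP => [->|_]; first by rewrite /sig comp_mpolyXU -tnth_nth tnth_mktuple.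
  by rewrite /sig comp_mpolyMNn comp_mpoly1.
rewrite (det_mxsub C (fun i => cls (f i)) (fun j => cls (g j))); apply: igMr; apply: igM; exact: Hdet.
Qed.

End Kern.


Lemma inj34 (f : 'I_3 -> 'I_4) : injective f ->
  exists (r : 'I_4) (s : 'I_3 -> 'I_3), forall i, f i = lift r (s i).
Proof.
move=> injf.
case: (pickP (fun r => r \notin codom f)) => [r Hr | Hall].
  exists r, (fun i => odflt ord0 (unlift r (f i))) => i.
  case: unliftP => [j -> // | E].
  by move: Hr; rewrite -E codom_f.
exfalso.
have : (#|'I_4| <= #|codom f|)%N.
  apply: subset_leq_card; apply/subsetP => r _.
  by move: (Hall r) => /= /negbFE.
by rewrite card_codom // !card_ord.
Qed.

Lemma dir1b (S : {mpoly int[4]} -> Prop) (mult : 'I_4 -> 'I_4 -> nat) :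
  (forall r c : 'I_4, ideal_gen S
     (\det (\matrix_(i < 3, j < 3) gen_laplacian mult (lift r i) (lift c j)))) ->
  forall p, critical_ideal mult 3 p -> ideal_gen S p.
Proof.
move=> H; apply: ig_sub => q [f [g [injf [injg ->]]]].
have [r [s Hs]] := inj34 injf.
have [c [t Ht]] := inj34 injg.
set B := \matrix_(i < 3, j < 3) gen_laplacian mult (lift r i) (lift c j).
have -> : \matrix_(i, j) gen_laplacian mult (f i) (g j) = \matrix_(i, j) B (s i) (t j).
  by apply/matrixP => i j; rewrite !mxE Hs Ht.
by rewrite det_mxsub; apply: igMr; apply: igM; apply: H.
Qed.


Section Minors.
Variables m n o : nat.
Local Notation N := (m + n + o)%N.
Local Notation R := {mpoly int[N]}.
Local Notation L := (gen_laplacian (Kmno_mult m n o)).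
Local Notation I3 := (critical_ideal (Kmno_mult m n o) 3).
Local Notation pt u := (tri_part m n (val u)).

Lemma LK (u v : 'I_N) :
  L u v = if u == v then 'X_u else if pt u == pt v then 0 else -1.
Proof.
rewrite mxE /Kmno_mult; case: (u == v) => //.
by case: (pt u == pt v); rewrite /= ?oppr0.
Qed.

Definition tri (a b c : 'I_N) (i : 'I_3) : 'I_N :=
  if val i == 0%N then a else if val i == 1%N then b else c.

Lemma tri_inj a b c : a != b -> a != c -> b != c -> injective (tri a b c).
Proof.
move=> ab ac bc [[|[|[|i]]] Hi] [[|[|[|j]]] Hj] //= E; apply/val_inj => //=;
 move: E; rewrite /tri /= => E; subst;
 by rewrite ?eqxx in ab ac bc.
Qed.

Lemma minor_in (a b c d e f : 'I_N) :
  a != b -> a != c -> b != c -> d != e -> d != f -> e != f ->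
  I3 (L a d * (L b e * L c f - L b f * L c e)
    - L a e * (L b d * L c f - L b f * L c d)
    + L a f * (L b d * L c e - L b e * L c d)).
Proof.
move=> ab ac bc de df ef; apply: igS.
exists (tri a b c), (tri d e f); split; first exact: tri_inj.
split; first exact: tri_inj.
by rewrite det3 !mxE.
Qed.

Lemma neq_pt (u v : 'I_N) : pt u != pt v -> u != v.
Proof. by apply: contraNneq => ->. Qed.


Ltac rwparts := repeat match goal with H : tri_part _ _ _ = _ |- _ => rewrite H end.
Ltac vneq := solve [ assumption | rewrite eq_sym; assumption
  | apply: neq_pt; rwparts; solve [assumption | rewrite eq_sym; assumption] ].
Ltac simp := repeat first
   [ rewrite eqxx
   | match goal with |- context [?x == ?y] =>
       have -> : (x == y) = false by apply/negbTE; vneq end ].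
Ltac fin := move=> /(_ ltac:(vneq) ltac:(vneq) ltac:(vneq) ltac:(vneq) ltac:(vneq) ltac:(vneq));
  rewrite !LK; rwparts; simp; move=> H;
  match goal with H : _ ?E |- _ ?t => suff -> : t = - E by apply: igN end;
  ring.

Lemma G1 (u a a' b b' : 'I_N) (U A B : nat) :
  pt u = U -> pt a = A -> pt a' = A -> pt b = B -> pt b' = B ->
  U != A -> U != B -> A != B -> a != a' -> b != b' ->
  I3 ('X_u + 2%:R).
Proof.
move=> Hu Ha Ha' Hb Hb' UA UB AB aa' bb'.
have := minor_in (a := u) (b := a) (c := b) (d := u) (e := a') (f := b'); fin.
Qed.


Lemma G2 (a a' b b' c c' : 'I_N) (A B C : nat) :
  pt a = A -> pt a' = A -> pt b = B -> pt b' = B -> pt c = C -> pt c' = C ->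
  A != B -> A != C -> B != C -> a != a' -> b != b' -> c != c' ->
  I3 2%:R.
Proof.
move=> Ha Ha' Hb Hb' Hc Hc' AB AC BC aa' bb' cc'.
have := minor_in (a := a) (b := b) (c := c) (d := a') (e := b') (f := c'); fin.
Qed.

Lemma G4 (u b b' z : 'I_N) (U B Z : nat) :
  pt u = U -> pt b = B -> pt b' = B -> pt z = Z ->
  U != B -> U != Z -> B != Z -> b != b' ->
  I3 ('X_u + 'X_z + 2%:R).
Proof.
move=> Hu Hb Hb' Hz UB UZ BZ bb'.
have := minor_in (a := u) (b := b) (c := z) (d := u) (e := b') (f := z); fin.
Qed.

Lemma G5 (u a b w : 'I_N) (U W : nat) :
  pt u = U -> pt a = U -> pt b = U -> pt w = W ->
  U != W -> u != a -> u != b -> a != b ->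
  I3 ('X_u).
Proof.
move=> Hu Ha Hb Hw UW ua ub ab.
have := minor_in (a := u) (b := a) (c := w) (d := u) (e := b) (f := w); fin.
Qed.

Lemma G6 (u v a b : 'I_N) (U A : nat) :
  pt u = U -> pt v = U -> pt a = A -> pt b = A ->
  U != A -> u != v -> a != b ->
  I3 ('X_u + 'X_v).
Proof.
move=> Hu Hv Ha Hb UA uv ab.
have := minor_in (a := u) (b := v) (c := a) (d := u) (e := v) (f := b); fin.
Qed.

Lemma G7 (u u' v v' : 'I_N) (U V : nat) :
  pt u = U -> pt u' = U -> pt v = V -> pt v' = V ->
  U != V -> u != u' -> v != v' ->
  I3 ('X_u * 'X_v).
Proof.
move=> Hu Hu' Hv Hv' UV uu' vv'.
have := minor_in (a := u) (b := v) (c := u') (d := u) (e := v) (f := v'); fin.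
Qed.

Lemma G8 (u u' w w' : 'I_N) (U W W' : nat) :
  pt u = U -> pt u' = U -> pt w = W -> pt w' = W' ->
  U != W -> U != W' -> W != W' -> u != u' ->
  I3 ('X_u * 'X_u' + 'X_u + 'X_u').
Proof.
move=> Hu Hu' Hw Hw' UW UW' WW' uu'.
have := minor_in (a := u) (b := u') (c := w) (d := u) (e := u') (f := w'); fin.
Qed.

Lemma G9 (u u' y z : 'I_N) (U Y Z : nat) :
  pt u = U -> pt u' = U -> pt y = Y -> pt z = Z ->
  U != Y -> U != Z -> Y != Z -> u != u' ->
  I3 ('X_u * 'X_z + 'X_u).
Proof.
move=> Hu Hu' Hy Hz UY UZ YZ uu'.
have := minor_in (a := u) (b := y) (c := z) (d := u) (e := u') (f := z); fin.
Qed.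

End Minors.


Section Cases.
Variables m n o : nat.
Local Notation N := (m + n + o)%N.
Local Notation R := {mpoly int[N]}.
Local Notation L := (gen_laplacian (Kmno_mult m n o)).
Local Notation I3 := (critical_ideal (Kmno_mult m n o) 3).
Local Notation pt u := (tri_part m n (val u)).

Lemma tpv0 k : (k < m)%N -> tri_part m n k = 0%N.
Proof. by rewrite /tri_part => ->. Qed.
Lemma tpv1 k : (m <= k)%N -> (k < m + n)%N -> tri_part m n k = 1%N.
Proof. move=> h1 h2; rewrite /tri_part; case: ifP => ?; [lia | case: ifP => ?; lia]. Qed.
Lemma tpv2 k : (m + n <= k)%N -> tri_part m n k = 2%N.
Proof. move=> h1; rewrite /tri_part; case: ifP => ?; [lia | case: ifP => ?; lia]. Qed.
Lemma tp_lt3 k : (tri_part m n k < 3)%N.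
Proof. by rewrite /tri_part; case: ifP => //; case: ifP. Qed.

Lemma XvE (u : 'I_N) : Xv N (val u) = 'X_u.
Proof. by rewrite /Xv valK. Qed.

Lemma KmE (u v : 'I_N) : Kmno_mult m n o u v = if pt u == pt v then 0%N else 1%N.
Proof. by rewrite /Kmno_mult; case: eqP. Qed.

Lemma inord_eq3 (a b : nat) : (a < 3)%N -> (b < 3)%N ->
  ((inord a : 'I_3) == inord b) = (a == b).
Proof.
move=> ha hb; apply/eqP/eqP => [|->//].
by move/(congr1 val); rewrite /= (@inordK 2 a) ?(@inordK 2 b).
Qed.

End Cases.

Ltac nlia := repeat match goal with
   | H : is_true (leq _ _) |- _ => progress simpl in H
   | H : @eq nat _ _ |- _ => progress simpl in H
   | H : ~ (@eq nat _ _) |- _ => progress simpl in H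
   | H : is_true (_ != _) |- _ => progress simpl in H end; simpl; lia.
Ltac tp := first [ by apply: tpv0; nlia | by apply: tpv1; nlia | by apply: tpv2; nlia ].
Ltac vd := by apply/eqP => /(congr1 val) /=; lia.
Ltac side := first [ tp | by [] | vd ].


Lemma case1 m n o : (n <= m)%N -> (o <= n)%N -> (2 <= o)%N ->
  forall p, critical_ideal (Kmno_mult m n o) 3 p <->
    ideal_gen (fun q => q = 2%:R \/ exists i : 'I_(m + n + o), q = 'X_i) p.
Proof.
move=> nm on o2 p; split.
  apply: (@dir1 _ _ _ (fun _ => 0) (fun u => inord (tri_part m n (val u)))
            (\matrix_(i, j) (if i == j then 0 else -1))).
  - by move=> i; rewrite subr0; apply: igS; right; exists i.
  - move=> u v; rewrite mxE inord_eq3 ?tp_lt3 // KmE.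
    case: eqP => [->|_]; first by rewrite eqxx.
    by case: eqP => _; rewrite ?mulr0n ?oppr0.
  - rewrite det3 !mxE /=.
    have -> : (0 * (0 * 0 - -1 * -1) - -1 * (-1 * 0 - -1 * -1) + -1 * (-1 * -1 - 0 * -1)
       : {mpoly int[m + n + o]}) = - 2%:R by ring.
    by apply: igN; apply: igS; left.
have H2 : critical_ideal (Kmno_mult m n o) 3 2%:R.
  apply: (@G2 m n o (@Ordinal (m+n+o) 0 ltac:(lia)) (@Ordinal (m+n+o) 1 ltac:(lia))
     (@Ordinal (m+n+o) m ltac:(lia)) (@Ordinal (m+n+o) m.+1 ltac:(lia))
     (@Ordinal (m+n+o) (m+n) ltac:(lia)) (@Ordinal (m+n+o) (m+n).+1 ltac:(lia)) 0 1 2);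
   side.
apply: ig_sub => q [->|[i ->]] //.
have Hi := ltn_ord i.
have -> : 'X_i = ('X_i + 2%:R) - (2%:R : {mpoly int[m + n + o]}) by rewrite addrK.
apply: igB => //.
case: (ltnP i m) => h1; [|case: (ltnP i (m + n)) => h2].
- apply: (@G1 m n o i (@Ordinal (m+n+o) m ltac:(lia)) (@Ordinal (m+n+o) m.+1 ltac:(lia))
     (@Ordinal (m+n+o) (m+n) ltac:(lia)) (@Ordinal (m+n+o) (m+n).+1 ltac:(lia)) 0 1 2); side.
- apply: (@G1 m n o i (@Ordinal (m+n+o) 0 ltac:(lia)) (@Ordinal (m+n+o) 1 ltac:(lia))
     (@Ordinal (m+n+o) (m+n) ltac:(lia)) (@Ordinal (m+n+o) (m+n).+1 ltac:(lia)) 1 0 2); side.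
- apply: (@G1 m n o i (@Ordinal (m+n+o) 0 ltac:(lia)) (@Ordinal (m+n+o) 1 ltac:(lia))
     (@Ordinal (m+n+o) m ltac:(lia)) (@Ordinal (m+n+o) m.+1 ltac:(lia)) 2 0 1); side.
Qed.

Lemma inord3 k : (k < 3)%N -> \val (inord k : 'I_3) = k.
Proof. by move=> h; rewrite /= (@inordK 2 k). Qed.
Lemma inord3tp m n k : \val (inord (tri_part m n k) : 'I_3) = tri_part m n k.
Proof. by rewrite inord3 // tp_lt3. Qed.

Lemma tp2E m n k : tri_part m n k = 2%N -> (m + n <= k)%N.
Proof. rewrite /tri_part; case: ifP => // ?; case: ifP => // ? _; lia. Qed.
Lemma tp1E m n k : tri_part m n k = 1%N -> (m <= k)%N /\ (k < m + n)%N.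
Proof. rewrite /tri_part; case: ifP => // ?; case: ifP => // ? _; lia. Qed.
Lemma tp0E m n k : tri_part m n k = 0%N -> (k < m)%N.
Proof. rewrite /tri_part; case: ifP => // ?; case: ifP => // ? _; lia. Qed.

Lemma case2 m n o : (n <= m)%N -> (o <= n)%N -> (2 <= n)%N -> o = 1%N ->
  forall p, critical_ideal (Kmno_mult m n o) 3 p <->
    ideal_gen (fun q => (exists i : 'I_(m + n + o), (val i < m + n)%N /\ q = 'X_i)
                        \/ q = zv m n o 1%N + 2%:R) p.
Proof.
move=> nm on n2 o1 p; subst o.
have hz : (m + n < m + n + 1)%N by lia.
pose zz := Ordinal hz.
have Ez : zv m n 1 1 = 'X_zz by rewrite /zv /= addn0 (XvE zz).
rewrite Ez.
pose d (i : nat) : {mpoly int[m+n+1]} := if i == 2%N then - 2%:R else 0.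
split.
  apply: (@dir1 _ _ _ (fun u => d (tri_part m n (val u))) (fun u => inord (tri_part m n (val u)))
            (\matrix_(i, j) (if val i == val j then d (val i) else -1))).
  - move=> i; rewrite /d; case: eqP => [/tp2E h|h].
      have Hiz : i = zz.
        apply/val_inj; rewrite /zz /=; have := ltn_ord i; nlia.
      rewrite Hiz.
      by rewrite opprK; apply: igS; right.
    rewrite subr0; apply: igS; left; exists i; split => //.
    case: (ltnP i (m + n)) => // h2; case: h; exact: tpv2.
  - move=> u v; rewrite mxE !inord3tp KmE.
    case: eqP => [->|uv]; first by rewrite eqxx.
    case: eqP => [E|_]; last by [].
    rewrite /d; case: eqP => [h|_]; last by rewrite mulr0n oppr0.
    exfalso; apply: uv; apply/val_inj.
    have h1 := tp2E h; rewrite E in h; have h2 := tp2E h.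
    have := ltn_ord u; have := ltn_ord v; nlia.
  - rewrite det3 !mxE /= /d /=.
    have -> : (0 * (0 * - 2%:R - -1 * -1) - -1 * (-1 * - 2%:R - -1 * -1) + -1 * (-1 * -1 - 0 * -1)
       : {mpoly int[m + n + 1]}) = 0 by ring.
    exact: ig0.
have Hz : critical_ideal (Kmno_mult m n 1) 3 ('X_zz + 2%:R).
  apply: (@G1 m n 1 zz (@Ordinal (m+n+1) 0 ltac:(lia)) (@Ordinal (m+n+1) 1 ltac:(lia))
     (@Ordinal (m+n+1) m ltac:(lia)) (@Ordinal (m+n+1) m.+1 ltac:(lia)) 2 0 1); side.
apply: ig_sub => q [[i [hi ->]]|->] //.
have -> : ('X_i : {mpoly int[m + n + 1]}) = ('X_i + 'X_zz + 2%:R) - ('X_zz + 2%:R) by ring.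
apply: igB => //.
case: (ltnP i m) => h1.
- apply: (@G4 m n 1 i (@Ordinal (m+n+1) m ltac:(lia)) (@Ordinal (m+n+1) m.+1 ltac:(lia))
     zz 0 1 2); side.
- apply: (@G4 m n 1 i (@Ordinal (m+n+1) 0 ltac:(lia)) (@Ordinal (m+n+1) 1 ltac:(lia))
     zz 1 0 2); side.
Qed.

Lemma pick2 (M i : nat) : (3 <= M)%N -> (i < M)%N ->
  exists a b, [/\ (a < M)%N, (b < M)%N, a != i, b != i & a != b].
Proof.
case: i => [|[|i]] h1 h2.
- by exists 1%N, 2%N; split => //; lia.
- by exists 0%N, 2%N; split => //; lia.
- by exists 0%N, 1%N; split => //; lia.
Qed.

Lemma x_in m n o (w : 'I_(m + n + o)) : (3 <= m)%N -> (m <= val w)%N ->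
  forall i : 'I_(m + n + o), (val i < m)%N -> critical_ideal (Kmno_mult m n o) 3 ('X_i).
Proof.
move=> m3 hw i hi.
have [a [b [ha hb ai bi ab]]] := pick2 m3 hi.
have ha' : (a < m + n + o)%N by lia.
have hb' : (b < m + n + o)%N by lia.
apply: (@G5 m n o i (Ordinal ha') (Ordinal hb') w 0 (tri_part m n (val w))); try side.
- by apply/eqP => E; have := tp0E (esym E); nlia.
- by apply/eqP => /(congr1 val) /= E; nlia.
- by apply/eqP => /(congr1 val) /= E; nlia.
Qed.

Lemma y_in m n o (w : 'I_(m + n + o)) : (3 <= n)%N -> (val w < m)%N ->
  forall i : 'I_(m + n + o), (m <= val i)%N -> (val i < m + n)%N ->
  critical_ideal (Kmno_mult m n o) 3 ('X_i).
Proof.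
move=> n3 hw i hi1 hi2.
have hi : (val i - m < n)%N by nlia.
have [a [b [ha hb ai bi ab]]] := pick2 n3 hi.
have ha' : (m + a < m + n + o)%N by lia.
have hb' : (m + b < m + n + o)%N by lia.
apply: (@G5 m n o i (Ordinal ha') (Ordinal hb') w 1 0); try side.
- by apply/eqP => /(congr1 val) /= E; nlia.
- by apply/eqP => /(congr1 val) /= E; nlia.
Qed.

Lemma case3 m n o : (n <= m)%N -> (o <= n)%N -> (3 <= m)%N -> n = 1%N -> o = 1%N ->
  forall p, critical_ideal (Kmno_mult m n o) 3 p <->
    ideal_gen (fun q => (exists i : 'I_(m + n + o), (val i < m)%N /\ q = 'X_i)
                        \/ q = yv m n o 1%N + zv m n o 1%N + 2%:R) p.
Proof.
move=> nm on m3 n1 o1 p; subst n o.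
have hy : (m < m + 1 + 1)%N by lia.
have hz : (m + 1 < m + 1 + 1)%N by lia.
pose yy := Ordinal hy. pose zz := Ordinal hz.
have Ey : yv m 1 1 1 = 'X_yy by rewrite /yv /= addn0 (XvE yy).
have Ez : zv m 1 1 1 = 'X_zz by rewrite /zv /= addn0 (XvE zz).
rewrite Ey Ez.
pose d (i : nat) : {mpoly int[m+1+1]} :=
  if i == 0%N then 0 else if i == 1%N then - 'X_zz - 2%:R else 'X_zz.
split.
  apply: (@dir1 _ _ _ (fun u => d (tri_part m 1 (val u))) (fun u => inord (tri_part m 1 (val u)))
            (\matrix_(i, j) (if val i == val j then d (val i) else -1))).
  - move=> i; rewrite /d; case: eqP => [h|h].
      rewrite /= subr0; apply: igS; left; exists i; split => //. exact: tp0E h.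
    case: eqP => [h1|h1].
      have Hiy : i = yy.
        apply/val_inj; rewrite /yy /=; have := tp1E h1; nlia.
      rewrite Hiy; have -> : 'X_yy - (- 'X_zz - 2%:R) = 'X_yy + 'X_zz + 2%:R :> {mpoly int[m+1+1]} by ring.
      by apply: igS; right.
    have Hiz : i = zz.
      apply/val_inj; rewrite /zz /=; have := ltn_ord i.
      case: (ltnP i m) => h2; first by case: h; apply: tpv0.
      case: (ltnP i (m + 1)) => h3; first by case: h1; apply: tpv1.
      nlia.
    by rewrite Hiz subrr; apply: ig0.
  - move=> u v; rewrite mxE !inord3tp KmE.
    case: eqP => [->|uv]; first by rewrite eqxx.
    case: eqP => [E|_]; last by [].
    rewrite /d; case: eqP => [h|h]; first by rewrite mulr0n oppr0.
    exfalso; apply: uv; apply/val_inj.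
    have := ltn_ord u; have := ltn_ord v.
    case: (ltnP u m) => h2; first by case: h; apply: tpv0.
    case: (ltnP v m) => h3; first by case: h; rewrite E; apply: tpv0.
    case: (ltnP u (m + 1)) => h4; case: (ltnP v (m + 1)) => h5; try nlia.
    + by move: E; rewrite (tpv1 h2 h4) tpv2.
    + by move: E; rewrite (tpv1 h3 h5) tpv2.
  - rewrite det3 !mxE /= /d /=.
    have -> : (0 * ((- 'X_zz - 2%:R) * 'X_zz - -1 * -1) - -1 * (-1 * 'X_zz - -1 * -1)
        + -1 * (-1 * -1 - (- 'X_zz - 2%:R) * -1)
       : {mpoly int[m + 1 + 1]}) = 0 by ring.
    exact: ig0.
have Hyz : critical_ideal (Kmno_mult m 1 1) 3 ('X_yy + 'X_zz + 2%:R).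
  apply: (@G4 m 1 1 yy (@Ordinal (m+1+1) 0 ltac:(lia)) (@Ordinal (m+1+1) 1 ltac:(lia))
     zz 1 0 2); side.
apply: ig_sub => q [[i [hi ->]]|->] //.
exact: (@x_in m 1 1 yy).
Qed.

Lemma tp_ne2 m n k : (k < m + n)%N -> (tri_part m n k == 2%N) = false.
Proof. by move=> h; apply/eqP => /tp2E; lia. Qed.

Lemma case5 m n o : (n <= m)%N -> (o <= n)%N -> (3 <= n)%N -> o = 0%N ->
  forall p, critical_ideal (Kmno_mult m n o) 3 p <->
    ideal_gen (fun q => exists i : 'I_(m + n + o), (val i < m + n)%N /\ q = 'X_i) p.
Proof.
move=> nm on n3 o0 p; subst o.
have Hlt : forall u : 'I_(m + n + 0), (val u < m + n)%N by move=> u; have := ltn_ord u; nlia.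
split.
  apply: (@dir1 _ _ _ (fun _ => 0) (fun u => inord (tri_part m n (val u)))
            (\matrix_(i, j) (if (val i == 2%N) || (val j == 2%N) then 0
                             else if val i == val j then 0 else -1))).
  - by move=> i; rewrite subr0; apply: igS; exists i.
  - move=> u v; rewrite mxE !inord3tp KmE !(tp_ne2 (Hlt _)) /=.
    case: eqP => [->|uv]; first by rewrite eqxx.
    by case: eqP => _; rewrite ?mulr0n ?oppr0.
  - rewrite det3 !mxE /=.
    have -> : (0 * (0 * 0 - 0 * 0) - -1 * (-1 * 0 - 0 * 0) + 0 * (-1 * 0 - 0 * 0)
       : {mpoly int[m + n + 0]}) = 0 by ring.
    exact: ig0.
apply: ig_sub => q [i [hi ->]].
case: (ltnP i m) => h1.
- apply: (@x_in m n 0 (@Ordinal (m+n+0) m ltac:(lia))) => //=; lia.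
- apply: (@y_in m n 0 (@Ordinal (m+n+0) 0 ltac:(lia))) => //=; lia.
Qed.

Lemma case8 m n o : (n <= m)%N -> (o <= n)%N -> (3 <= m)%N -> n = 1%N -> o = 0%N ->
  forall p, critical_ideal (Kmno_mult m n o) 3 p <->
    ideal_gen (fun q => exists i : 'I_(m + n + o), (val i < m)%N /\ q = 'X_i) p.
Proof.
move=> nm on m3 n1 o0 p; subst n o.
have Hlt : forall u : 'I_(m + 1 + 0), (val u < m + 1)%N by move=> u; have := ltn_ord u; nlia.
have hy : (m < m + 1 + 0)%N by lia.
pose yy := Ordinal hy.
pose d (i : nat) : {mpoly int[m+1+0]} := if i == 1%N then 'X_yy else 0.
split.
  apply: (@dir1 _ _ _ (fun u => d (tri_part m 1 (val u))) (fun u => inord (tri_part m 1 (val u)))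
            (\matrix_(i, j) (if (val i == 2%N) || (val j == 2%N) then 0
                             else if val i == val j then d (val i) else -1))).
  - move=> i; rewrite /d; case: eqP => [h1|h1] /=.
      have Hiy : i = yy.
        apply/val_inj; rewrite /yy /=; have := tp1E h1; nlia.
      by rewrite Hiy subrr; apply: ig0.
    rewrite subr0; apply: igS; exists i; split => //.
    case: (ltnP i m) => // h2; case: h1; apply: tpv1 => //; exact: Hlt.
  - move=> u v; rewrite mxE !inord3tp KmE !(tp_ne2 (Hlt _)) /=.
    case: eqP => [->|uv]; first by rewrite eqxx.
    case: eqP => [E|_]; last by [].
    rewrite /d; case: eqP => [h|h]; last by rewrite mulr0n oppr0.
    exfalso; apply: uv; apply/val_inj.
    have := tp1E h; rewrite E in h; have := tp1E h; nlia.
  - rewrite det3 !mxE /= /d /=.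
    have -> : (0 * ('X_yy * 0 - 0 * 0) - -1 * (-1 * 0 - 0 * 0) + 0 * (-1 * 0 - 'X_yy * 0)
       : {mpoly int[m + 1 + 0]}) = 0 by ring.
    exact: ig0.
apply: ig_sub => q [i [hi ->]].
by apply: (@x_in m 1 0 yy).
Qed.

Lemma case6 m n o : (n <= m)%N -> (o <= n)%N -> (3 <= m)%N -> n = 2%N -> o = 0%N ->
  forall p, critical_ideal (Kmno_mult m n o) 3 p <->
    ideal_gen (fun q => (exists i : 'I_(m + n + o), (val i < m)%N /\ q = 'X_i)
                        \/ q = yv m n o 1%N + yv m n o 2%N) p.
Proof.
move=> nm on m3 n2 o0 p; subst n o.
have hy1 : (m < m + 2 + 0)%N by lia.
have hy2 : (m + 1 < m + 2 + 0)%N by lia.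
pose y1 := Ordinal hy1. pose y2 := Ordinal hy2.
have Ey1 : yv m 2 0 1 = 'X_y1 by rewrite /yv /= (addn0 m) (XvE y1).
have Ey2 : yv m 2 0 2 = 'X_y2 by rewrite /yv /= (XvE y2).
rewrite Ey1 Ey2.
pose cl (k : nat) : nat := if (k < m)%N then 0%N else if k == m then 1%N else 2%N.
have cl3 : forall k, (cl k < 3)%N by move=> k; rewrite /cl; case: ifP => //; case: ifP.
pose d (i : nat) : {mpoly int[m+2+0]} :=
  if i == 0%N then 0 else if i == 1%N then 'X_y1 else - 'X_y1.
split.
  apply: (@dir1 _ _ _ (fun u => d (cl (val u))) (fun u => inord (cl (val u)))
            (\matrix_(i, j) (if val i == val j then d (val i)
                             else if (val i == 0%N) || (val j == 0%N) then -1 else 0))).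
  - move=> i; rewrite /d /cl; case: (ltnP i m) => h1 /=.
      by rewrite subr0; apply: igS; left; exists i.
    case: (eqVneq (val i) m) => [h2|h2].
      rewrite /=.
      have -> : i = y1 by apply/val_inj; rewrite /y1 /= h2.
      by rewrite subrr; apply: ig0.
    rewrite /=.
    have -> : i = y2 by apply/val_inj; rewrite /y2 /=; have := ltn_ord i; nlia.
    by rewrite opprK addrC; apply: igS; right.
  - move=> u v; rewrite mxE !(inord3 (cl3 _)) KmE.
    case: eqP => [->|uv]; first by rewrite eqxx.
    have := ltn_ord u; have := ltn_ord v; rewrite /cl.
    case: (ltnP u m) => hu; case: (ltnP v m) => hv => /= Hv Hu.
    + by rewrite (tpv0 2 hu) (tpv0 2 hv) /= mulr0n oppr0.
    + have hv' : (v < m + 2)%N by nlia.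
      rewrite (tpv0 2 hu) (tpv1 hv hv') /=.
      by case: (_ == m).
    + have hu' : (u < m + 2)%N by nlia.
      rewrite (tpv0 2 hv) (tpv1 hu hu') /=.
      by case: (_ == m).
    + have hv' : (v < m + 2)%N by nlia.
      have hu' : (u < m + 2)%N by nlia.
      rewrite (tpv1 hu hu') (tpv1 hv hv') /= mulr0n oppr0.
      case: (eqVneq (val u) m) => eu; case: (eqVneq (val v) m) => ev //=.
      * by exfalso; apply: uv; apply/val_inj; rewrite /= eu ev.
      * by exfalso; apply: uv; apply/val_inj; nlia.
  - rewrite det3 !mxE /= /d /=.
    have -> : (0 * ('X_y1 * - 'X_y1 - 0 * 0) - -1 * (-1 * - 'X_y1 - 0 * -1)
        + -1 * (-1 * 0 - 'X_y1 * -1) : {mpoly int[m + 2 + 0]}) = 0 by ring.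
    exact: ig0.
have Hy : critical_ideal (Kmno_mult m 2 0) 3 ('X_y1 + 'X_y2).
  apply: (@G6 m 2 0 y1 y2 (@Ordinal (m+2+0) 0 ltac:(lia)) (@Ordinal (m+2+0) 1 ltac:(lia))
     1 0); side.
apply: ig_sub => q [[i [hi ->]]|->] //.
by apply: (@x_in m 2 0 y1).
Qed.


Lemma ig_lin3 (R : comPzRingType) (S : R -> Prop) g1 g2 g3 a1 a2 a3 :
  ideal_gen S g1 -> ideal_gen S g2 -> ideal_gen S g3 ->
  ideal_gen S (a1 * g1 + a2 * g2 + a3 * g3).
Proof. by move=> h1 h2 h3; apply: igD; [apply: igD|]; apply: igM. Qed.

Lemma ig_lin4 (R : comPzRingType) (S : R -> Prop) g1 g2 g3 g4 a1 a2 a3 a4 :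
  ideal_gen S g1 -> ideal_gen S g2 -> ideal_gen S g3 -> ideal_gen S g4 ->
  ideal_gen S (a1 * g1 + a2 * g2 + a3 * g3 + a4 * g4).
Proof. by move=> h1 h2 h3 h4; apply: igD; [apply: igD; [apply: igD|]|]; apply: igM. Qed.

Notation XX k := (Xv 4 k).

Ltac normX := repeat match goal with |- context [Xv 4 ?k] =>
  lazymatch k with 0%N => fail | 1%N => fail | 2%N => fail | 3%N => fail
  | _ => let k' := eval compute in k in change (Xv 4 k) with (Xv 4 k') end end.

Lemma XvE4 (u : 'I_4) : Xv 4 (val u) = 'X_u.
Proof. by rewrite /Xv valK. Qed.

Lemma case7 (p : {mpoly int[4]}) : critical_ideal (Kmno_mult 2 2 0) 3 p <->
  ideal_gen (fun q : {mpoly int[4]} => q = XX 1 * XX 3 \/ q = XX 0 + XX 1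
                      \/ q = XX 2 + XX 3) p.
Proof.
set S := (fun q => _).
have h1 : ideal_gen S (XX 1 * XX 3) by apply: igS; left.
have h2 : ideal_gen S (XX 0 + XX 1) by apply: igS; right; left.
have h3 : ideal_gen S (XX 2 + XX 3) by apply: igS; right; right.
split.
  apply: dir1b => r c.
  case: r => [[|[|[|[|r]]]] Hr] //; case: c => [[|[|[|[|c]]]] Hc] //;
  rewrite det3 !mxE /Kmno_mult /tri_part -?XvE4 /=; normX.
  { apply: (ig_eq _ (ig_lin3 (XX 2) 0 ((-(1)%:R)) h1 h2 h3)); ring. }
  { apply: (ig_eq _ (ig_lin3 0 0 ((-(1)%:R)) h1 h2 h3)); ring. }
  { apply: (ig_eq _ (ig_lin3 ((1)%:R) 0 0 h1 h2 h3)); ring. }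
  { apply: (ig_eq _ (ig_lin3 ((1)%:R) 0 (-(XX 1)) h1 h2 h3)); ring. }
  { apply: (ig_eq _ (ig_lin3 0 0 ((-(1)%:R)) h1 h2 h3)); ring. }
  { apply: (ig_eq _ (ig_lin3 (-(XX 2)) (XX 2*XX 3) ((-(1)%:R)) h1 h2 h3)); ring. }
  { apply: (ig_eq _ (ig_lin3 ((1)%:R) (-(XX 3)) 0 h1 h2 h3)); ring. }
  { apply: (ig_eq _ (ig_lin3 ((1)%:R) (XX 2) (-(XX 1)) h1 h2 h3)); ring. }
  { apply: (ig_eq _ (ig_lin3 ((1)%:R) 0 0 h1 h2 h3)); ring. }
  { apply: (ig_eq _ (ig_lin3 ((1)%:R) (-(XX 3)) 0 h1 h2 h3)); ring. }
  { apply: (ig_eq _ (ig_lin3 (XX 0) ((-(1)%:R)) 0 h1 h2 h3)); ring. }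
  { apply: (ig_eq _ (ig_lin3 0 ((-(1)%:R)) 0 h1 h2 h3)); ring. }
  { apply: (ig_eq _ (ig_lin3 ((1)%:R) 0 (-(XX 1)) h1 h2 h3)); ring. }
  { apply: (ig_eq _ (ig_lin3 ((1)%:R) (XX 2) (-(XX 1)) h1 h2 h3)); ring. }
  { apply: (ig_eq _ (ig_lin3 0 ((-(1)%:R)) 0 h1 h2 h3)); ring. }
  { apply: (ig_eq _ (ig_lin3 (XX 1) ((-(1)%:R) + XX 1*XX 2) (-(XX 1*XX 1)) h1 h2 h3)); ring. }
apply: ig_sub => q [->|[->|->]].
- have H := (@G7 2 2 0 (@Ordinal (2+2+0) 1 isT) (@Ordinal (2+2+0) 0 isT)
     (@Ordinal (2+2+0) 3 isT) (@Ordinal (2+2+0) 2 isT) 0 1 erefl erefl erefl erefl isT isT isT).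
  by rewrite -!XvE /= in H.
- have H := (@G6 2 2 0 (@Ordinal (2+2+0) 0 isT) (@Ordinal (2+2+0) 1 isT)
     (@Ordinal (2+2+0) 2 isT) (@Ordinal (2+2+0) 3 isT) 0 1 erefl erefl erefl erefl isT isT isT).
  by rewrite -!XvE /= in H.
- have H := (@G6 2 2 0 (@Ordinal (2+2+0) 2 isT) (@Ordinal (2+2+0) 3 isT)
     (@Ordinal (2+2+0) 0 isT) (@Ordinal (2+2+0) 1 isT) 1 0 erefl erefl erefl erefl isT isT isT).
  by rewrite -!XvE /= in H.
Qed.


Lemma case4 (p : {mpoly int[4]}) : critical_ideal (Kmno_mult 2 1 1) 3 p <->
  ideal_gen (fun q : {mpoly int[4]} => q = XX 0 * XX 1 + XX 0 + XX 1
     \/ q = XX 0 * XX 3 + XX 0 \/ q = XX 1 * XX 3 + XX 1 \/ q = XX 2 + XX 3 + 2%:R) p.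
Proof.
set S := (fun q => _).
have h1 : ideal_gen S (XX 0 * XX 1 + XX 0 + XX 1) by apply: igS; left.
have h2 : ideal_gen S (XX 0 * XX 3 + XX 0) by apply: igS; right; left.
have h3 : ideal_gen S (XX 1 * XX 3 + XX 1) by apply: igS; right; right; left.
have h4 : ideal_gen S (XX 2 + XX 3 + 2%:R) by apply: igS; right; right; right.
split.
  apply: dir1b => r c.
  case: r => [[|[|[|[|r]]]] Hr] //; case: c => [[|[|[|[|c]]]] Hc] //;
  rewrite det3 !mxE /Kmno_mult /tri_part -?XvE4 /=; normX.
  { apply: (ig_eq _ (ig_lin4 0 0 ((1)%:R + XX 2) ((-(1)%:R) + -(XX 1)) h1 h2 h3 h4)); ring. }
  { apply: (ig_eq _ (ig_lin4 0 0 0 ((-(1)%:R)) h1 h2 h3 h4)); ring. }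
  { apply: (ig_eq _ (ig_lin4 0 0 ((1)%:R) 0 h1 h2 h3 h4)); ring. }
  { apply: (ig_eq _ (ig_lin4 0 0 ((1)%:R) (-(XX 1)) h1 h2 h3 h4)); ring. }
  { apply: (ig_eq _ (ig_lin4 0 0 0 ((-(1)%:R)) h1 h2 h3 h4)); ring. }
  { apply: (ig_eq _ (ig_lin4 0 ((1)%:R + XX 2) 0 ((-(1)%:R) + -(XX 0)) h1 h2 h3 h4)); ring. }
  { apply: (ig_eq _ (ig_lin4 0 ((-(1)%:R)) 0 0 h1 h2 h3 h4)); ring. }
  { apply: (ig_eq _ (ig_lin4 0 ((-(1)%:R)) 0 (XX 0) h1 h2 h3 h4)); ring. }
  { apply: (ig_eq _ (ig_lin4 0 0 ((1)%:R) 0 h1 h2 h3 h4)); ring. }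
  { apply: (ig_eq _ (ig_lin4 0 ((-(1)%:R)) 0 0 h1 h2 h3 h4)); ring. }
  { apply: (ig_eq _ (ig_lin4 (XX 3) ((-(1)%:R)) ((-(1)%:R)) 0 h1 h2 h3 h4)); ring. }
  { apply: (ig_eq _ (ig_lin4 ((-(1)%:R)) 0 0 0 h1 h2 h3 h4)); ring. }
  { apply: (ig_eq _ (ig_lin4 0 0 ((1)%:R) (-(XX 1)) h1 h2 h3 h4)); ring. }
  { apply: (ig_eq _ (ig_lin4 0 ((-(1)%:R)) 0 (XX 0) h1 h2 h3 h4)); ring. }
  { apply: (ig_eq _ (ig_lin4 ((-(1)%:R)) 0 0 0 h1 h2 h3 h4)); ring. }
  { apply: (ig_eq _ (ig_lin4 (XX 2) ((1)%:R) ((1)%:R) (-(XX 1) + -(XX 0)) h1 h2 h3 h4)); ring. }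
apply: ig_sub => q [->|[->|[->|->]]].
- have H := (@G8 2 1 1 (@Ordinal (2+1+1) 0 isT) (@Ordinal (2+1+1) 1 isT)
     (@Ordinal (2+1+1) 2 isT) (@Ordinal (2+1+1) 3 isT) 0 1 2 erefl erefl erefl erefl isT isT isT isT).
  by rewrite -!XvE /= in H.
- have H := (@G9 2 1 1 (@Ordinal (2+1+1) 0 isT) (@Ordinal (2+1+1) 1 isT)
     (@Ordinal (2+1+1) 2 isT) (@Ordinal (2+1+1) 3 isT) 0 1 2 erefl erefl erefl erefl isT isT isT isT).
  by rewrite -!XvE /= in H.
- have H := (@G9 2 1 1 (@Ordinal (2+1+1) 1 isT) (@Ordinal (2+1+1) 0 isT)
     (@Ordinal (2+1+1) 2 isT) (@Ordinal (2+1+1) 3 isT) 0 1 2 erefl erefl erefl erefl isT isT isT isT).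
  by rewrite -!XvE /= in H.
- have H := (@G4 2 1 1 (@Ordinal (2+1+1) 2 isT) (@Ordinal (2+1+1) 0 isT)
     (@Ordinal (2+1+1) 1 isT) (@Ordinal (2+1+1) 3 isT) 1 0 2 erefl erefl erefl erefl isT isT isT isT).
  by rewrite -!XvE /= in H.
Qed.

Unset Implicit Arguments.


Theorem theorem4p4 (m n o : nat) :
  (n <= m)%N -> (o <= n)%N -> (4 <= m + n + o)%N ->
  graph_connected (Kmno_adj m n o) ->
  let I3 := critical_ideal (Kmno_mult m n o) 3 in
  let x := xv m n o in let y := yv m n o in let z := zv m n o in
  let V := fun i : 'I_(m + n + o) => ('X_i : {mpoly int[m + n + o]}) in
  (   ((2 <= o)%N ->
     forall p, I3 p <-> ideal_gen (fun q => q = 2%:R \/ exists i, q = V i) p) /\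
   ((2 <= n)%N -> o = 1%N ->
     forall p, I3 p <-> ideal_gen (fun q =>
        (exists i, (val i < m + n)%N /\ q = V i) \/ q = z 1%N + 2%:R) p) /\
   ((3 <= m)%N -> n = 1%N -> o = 1%N ->
     forall p, I3 p <-> ideal_gen (fun q =>
        (exists i, (val i < m)%N /\ q = V i) \/ q = y 1%N + z 1%N + 2%:R) p) /\
   (m = 2%N -> n = 1%N -> o = 1%N ->
     forall p, I3 p <-> ideal_gen (fun q =>
        (q = x 1%N * x 2%N + x 1%N + x 2%N \/ q = x 1%N * z 1%N + x 1%N
          \/ q = x 2%N * z 1%N + x 2%N \/ q = y 1%N + z 1%N + 2%:R)) p) /\
   ((3 <= n)%N -> o = 0%N ->
     forall p, I3 p <-> ideal_gen (fun q =>
        exists i, (val i < m + n)%N /\ q = V i) p) /\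
   ((3 <= m)%N -> n = 2%N -> o = 0%N ->
     forall p, I3 p <-> ideal_gen (fun q =>
        (exists i, (val i < m)%N /\ q = V i) \/ q = y 1%N + y 2%N) p) /\
   (m = 2%N -> n = 2%N -> o = 0%N ->
     forall p, I3 p <-> ideal_gen (fun q =>
        (q = x 2%N * y 2%N \/ q = x 1%N + x 2%N \/ q = y 1%N + y 2%N)) p) /\
   ((3 <= m)%N -> n = 1%N -> o = 0%N ->
     forall p, I3 p <-> ideal_gen (fun q =>
        exists i, (val i < m)%N /\ q = V i) p)).

Proof.
move=> nm on h4 _; cbv zeta.
split; first exact: (case1 nm on).
split; first exact: (case2 nm on).
split; first exact: (case3 nm on).
split.
  by move=> m2 n1 o1 p; subst m n o; exact: case4.
split; first exact: (case5 nm on).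
split; first exact: (case6 nm on).
split.
  by move=> m2 n2 o0 p; subst m n o; exact: case7.
exact: (case8 nm on).
Qed.
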